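(* Let $T_1=(Q_1,\Sigma,\Delta,R_1,q_1^0)$ and $T_2=(Q_2,\Delta,\Omega,R_2,q_2^0)$ be top-down tree transducers, let $\hat{T}_1$ be the product construction of $T_1$ and the domain automaton of $T_2$, and let $M$ be the look-ahead transducer constructed from $T_1$ and $T_2$ as described in the context. Let $(q_1,S)$ be a state of $\hat{T}_1$ and $q_2$ a state of $T_2$ such that $(q_1,S,q_2)$ is a state of $M$. If on input $s\in T_\Sigma$ the state $(q_1,S)$ of $\hat{T}_1$ can produce the tree $t$, and on input $t$ the state $q_2$ of $T_2$ can produce the tree $r$, then the state $(q_1,S,q_2)$ of $M$ can produce $r$ on input $s$.
   Context: A top-down tree transducer $T=(Q,\Sigma,\Delta,R,q_0)$ has finite state set $Q$, ranked input/output alphabets $\Sigma,\Delta$, initial state $q_0$, and finite rule set $R$ of rules $q(a(x_1,\dots,x_k))\to t$ with $a\in\Sigma_k$ ($\Sigma_k$ = symbols of rank $k$) and $t$ a tree over $\Delta$ whose leaves may additionally be of the form $q'(x_i)$, $q'\in Q$, $i\in[k]$; rules are used as rewrite rules in the usual way; a state $q$ produces $t$ on input $s$ if the tree $t$ over $\Delta$ is derivable from $q(s)$. For $q\in Q$, $a\in\Sigma_k$, $\text{rhs}_T(q,a)$ is the set of right-hand sides of rules with left-hand side $q(a(x_1,\dots,x_k))$; for a right-hand side $\xi$ (resp. a set $\Gamma$ of right-hand sides), $\xi[x_i]$ (resp. $\Gamma[x_i]$) is the set of states $q'$ such that $q'(x_i)$ occurs in $\xi$ (resp. in some tree of $\Gamma$).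 Domain automaton of $T$: the top-down tree automaton (transducer over $\Sigma$ with rules of the form $p(a(x_1,\dots,x_k))\to a(p_1(x_1),\dots,p_k(x_k))$) with states all subsets of $Q$, initial state $\{q_0\}$, rules $S(a(x_1,\dots,x_k))\to a(S_1(x_1),\dots,S_k(x_k))$ for every $a\in\Sigma_k$, nonempty $S=\{q_1,\dots,q_n\}\subseteq Q$ and nonempty $\Gamma_j\subseteq\text{rhs}_T(q_j,a)$ ($j\in[n]$), where $S_i=\bigcup_j\Gamma_j[x_i]$, and rules $\emptyset(a(x_1,\dots,x_k))\to a(\emptyset(x_1),\dots,\emptyset(x_k))$ for all $a$; for an automaton state $l$, $\text{dom}(l)$ is the set of trees accepted from $l$. Product construction of transducers $T=(Q,\Sigma,\Delta,R,q_0)$ and $T'=(Q',\Delta,\Omega,R',q'_0)$: the transducer with states $Q\times Q'$, initial state $(q_0,q'_0)$, and, for every rule $q(a(x_1,\dots,x_k))\to\xi$ of $T$, every $p\in Q'$ and every tree $\zeta$ derivable from $p(\xi)$ using rules of $T'$ in which the leaves of $\xi$ of the form $q''(x_i)$ are treated as unrewritable symbols and a state $p'$ applied to such a leaf stays as $p'(q''(x_i))$, the rule $(q,p)(a(x_1,\dots,x_k))\to\zeta'$ (said to be obtained from the rule $q(a(x_1,\dots,x_k))\to\xi$ by translating $\xi$ with $p$), where $\zeta'$ replaces each $p'(q''(x_i))$ by $(q'',p')(x_i)$. A top-down tree transducer with look-ahead is a tuple $(Q,\Sigma,\Delta,R,q_0,B)$ where $B$ is a top-down tree automaton over $\Sigma$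 with state set $L$ and rules have the form $q(a(x_1\!:\!l_1,\dots,x_k\!:\!l_k))\to t$ with $l_i\in L$; on input $s$, each node $v$ with label $a\in\Sigma_k$ is first relabeled by $\langle a,l_1,\dots,l_k\rangle$ where $l_i\in L$ are such that the $i$-th subtree of $v$ is in $\text{dom}(l_i)$, and the relabeled tree is then processed reading each rule as $q(\langle a,l_1,\dots,l_k\rangle(x_1,\dots,x_k))\to t$; a state produces $r$ on input $s$ if $r$ is obtainable this way starting from that state. Construction of $M$: let $\hat{T}_1$ be the product construction of $T_1$ and the domain automaton of $T_2$ (states written $(q,S)$ with $q\in Q_1$, $S\subseteq Q_2$), and $N$ the product construction of $\hat{T}_1$ and $T_2$ (states written $(q,S,q')$). The states of $M$ are the $(q,S,q')$ with $q'\in S$; its initial state is $(q_1^0,\{q_2^0\},q_2^0)$; its look-ahead automaton is the domain automaton $\hat{A}$ of $\hat{T}_1$. For every rule $(q,S,q')(a(x_1,\dots,x_k))\to\gamma$ of $N$ involving only such states, obtained from the rule $(q,S)(a(x_1,\dots,x_k))\to\xi$ of $\hat{T}_1$ by translating $\xi$ with $q'$, and for all states $l_1,\dots,l_k$ of $\hat{A}$ with $\xi[x_i]\subseteq l_i$ ($i\in[k]$), $M$ has the rule $(q,S,q')(a(x_1\!:\!l_1,\dots,x_k\!:\!l_k))\to\gamma$. *)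

(* Defs.v *)
From Stdlib Require Import Relations.
From Stdlib Require List.
From mathcomp Require Import all_boot.
Set Implicit Arguments. Unset Strict Implicit. Unset Printing Implicit Defensive.

Inductive tree (A : Type) : Type := Node : A -> seq (tree A) -> tree A.
Arguments Node {A}.

Fixpoint tmap A B (f : A -> B) (t : tree A) : tree B :=
  match t with Node a ts => Node (f a) (map (tmap f) ts) end.

(** [t] is a tree over the ranked alphabet (A, rk), i.e. t \in T_A. *)
Fixpoint wr A (rk : A -> nat) (t : tree A) : bool :=
  match t with Node a ts => (size ts == rk a) && all (wr rk) ts end.

(** Right-hand sides: trees over D whose leaves may also be q'(x_i),
    encoded as a childless node labelled [inr (q', i)].
    Variables are 0-indexed: x_1,...,x_k are i = 0,...,k-1. *)
Fixpoint wf_rhs Q D (rk : D -> nat) (k : nat) (xi : tree (D + Q * nat)) : bool :=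
  match xi with
  | Node (inl d) ts => (size ts == rk d) && all (wf_rhs rk k) ts
  | Node (inr (_, i)) ts => (i < k) && (size ts == 0)
  end.

(** The pairs (q', i) such that q'(x_i) occurs in xi;  q' \in xi[x_i]
    iff List.In (q', i) (vars xi). *)
Fixpoint vars Q D (xi : tree (D + Q * nat)) : seq (Q * nat) :=
  match xi with
  | Node (inl _) ts => flatten (map (@vars Q D) ts)
  | Node (inr qi) _ => [:: qi]
  end.

(** Rule set of a transducer with states Q, input Sg, output D:
    [R q a xi] means  q(a(x_1,...,x_k)) -> xi  is a rule (k = rank a). *)
Definition rules (Q Sg D : Type) := Q -> Sg -> tree (D + Q * nat) -> Prop.

Definition rules_of Q Sg D (R : seq (Q * Sg * tree (D + Q * nat))) : rules Q Sg D :=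
  fun q a xi => List.In (q, a, xi) R.

Definition wf_td Q Sg D (rkS : Sg -> nat) (rkD : D -> nat)
  (R : seq (Q * Sg * tree (D + Q * nat))) : Prop :=
  forall q a xi, List.In (q, a, xi) R -> wf_rhs rkD (rkS a) xi.

(** Sentential forms: trees over output symbols, unary state symbols and
    input symbols. *)
Inductive sf (Q Sg D : Type) := SOut of D | SSt of Q | SIn of Sg.
Arguments SOut {Q Sg D}. Arguments SSt {Q Sg D}. Arguments SIn {Q Sg D}.

Fixpoint inst Q Sg D (ss : seq (tree Sg)) (xi : tree (D + Q * nat))
  : tree (sf Q Sg D) :=
  match xi with
  | Node (inl d) ts => Node (SOut d) (map (inst ss) ts)
  | Node (inr (q, i)) _ =>
      Node (SSt q) (take 1 (drop i (map (tmap SIn) ss)))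
  end.

Inductive step Q Sg D (R : rules Q Sg D) : tree (sf Q Sg D) -> tree (sf Q Sg D) -> Prop :=
| step_root q a (ss : seq (tree Sg)) xi :
    R q a xi ->
    step R (Node (SSt q) [:: Node (SIn a) (map (tmap SIn) ss)]) (inst ss xi)
| step_ctx l ts1 t t' ts2 :
    step R t t' -> step R (Node l (ts1 ++ t :: ts2)) (Node l (ts1 ++ t' :: ts2)).

Definition produces Q Sg D (R : rules Q Sg D) (q : Q) (s : tree Sg) (t : tree D) : Prop :=
  clos_refl_trans _ (step R) (Node (SSt q) [:: tmap SIn s]) (tmap SOut t).

Definition dom_aut (Q : finType) (Sg D : Type) (rk : Sg -> nat) (R : rules Q Sg D)
  : rules {set Q} Sg Sg :=
  fun P a xi =>
    exists f : nat -> {set Q},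
      xi = Node (inl a) (mkseq (fun i => Node (inr (f i, i)) [::]) (rk a)) /\
      (if P == set0 then forall i, i < rk a -> f i = set0
       else exists G : Q -> tree (D + Q * nat) -> Prop,
         (forall q, q \in P -> (exists x, G q x) /\ (forall x, G q x -> R q a x)) /\
         (forall i, i < rk a -> forall q',
            q' \in f i <-> exists q x, [/\ q \in P, G q x & List.In (q', i) (vars x)])).

(** Acceptance by a top-down automaton (seen as a transducer): dom(l). *)
Definition accepts (L Sg : Type) (A : rules L Sg Sg) (l : L) (s : tree Sg) : Prop :=
  produces A l s s.

(** Product construction. T' reads trees over D + Q*nat where the leaves
    q''(x_i) are unrewritable (no rules). *)
Definition lift Q Q' D O (R' : rules Q' D O) : rules Q' (D + Q * nat) O :=
  fun p x chi => match x with inl d => R' p d chi | inr _ => False end.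

Fixpoint leafvars A B (t : tree (A + B)) : bool :=
  match t with
  | Node (inl _) ts => all (@leafvars A B) ts
  | Node (inr _) ts => size ts == 0
  end.

(** zeta' viewed as the final sentential form zeta: (q'',p')(x_i) is p'(q''(x_i)). *)
Fixpoint emb_mixed Q Q' D O (z : tree (O + (Q * Q') * nat))
  : tree (sf Q' (D + Q * nat) O) :=
  match z with
  | Node (inl o) ts => Node (SOut o) (map (@emb_mixed Q Q' D O) ts)
  | Node (inr ((q, p), i)) _ => Node (SSt p) [:: Node (SIn (inr (q, i))) [::]]
  end.

Definition translate Q Q' D O (R' : rules Q' D O) (p : Q') (xi : tree (D + Q * nat))
  (z : tree (O + (Q * Q') * nat)) : Prop :=
  leafvars z /\
  clos_refl_trans _ (step (@lift Q Q' D O R')) (Node (SSt p) [:: tmap SIn xi]) (@emb_mixed Q Q' D O z).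

Definition product Q Q' Sg D O (R : rules Q Sg D) (R' : rules Q' D O)
  : rules (Q * Q') Sg O :=
  fun qp a z => exists xi, R qp.1 a xi /\ translate R' qp.2 xi z.

(** Top-down transducers with look-ahead: rules q(a(x_1:l_1,...,x_k:l_k)) -> t
    are [RL q a [:: l_1; ...; l_k] t]. *)
Definition la_rules (Q Sg D L : Type) := Q -> Sg -> seq L -> tree (D + Q * nat) -> Prop.

Inductive relab (Sg L : Type) (dom : L -> tree Sg -> Prop) : tree Sg -> tree (Sg * seq L) -> Prop :=
| relab_node a ss ls ss' :
    List.Forall2 dom ls ss -> List.Forall2 (relab dom) ss ss' ->
    relab dom (Node a ss) (Node (a, ls) ss').

Definition la_produces Q Sg D L (RL : la_rules Q Sg D L) (dom : L -> tree Sg -> Prop)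
  (q : Q) (s : tree Sg) (r : tree D) : Prop :=
  exists s', relab dom s s' /\ produces (fun q x xi => RL q x.1 x.2 xi) q s' r.

Section Construction.
Variables (Sg De Om : Type) (rkS : Sg -> nat) (rkD : De -> nat).
Variables (Q1 Q2 : finType) (R1 : rules Q1 Sg De) (R2 : rules Q2 De Om).

Definition That1 : rules (Q1 * {set Q2}) Sg De := product R1 (dom_aut rkD R2).

Definition Nrules : rules ((Q1 * {set Q2}) * Q2) Sg Om := product That1 R2.

Definition Mla : rules {set (Q1 * {set Q2})} Sg Sg := dom_aut rkS That1.

Definition Mstate (st : (Q1 * {set Q2}) * Q2) : bool := st.2 \in st.1.2.

Definition Mrules : la_rules ((Q1 * {set Q2}) * Q2) Sg Om {set (Q1 * {set Q2})} :=
  fun st a ls g =>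
    [/\ Mstate st,
        (forall st' i, List.In (st', i) (vars g) -> Mstate st') &
        exists xi, [/\ That1 st.1 a xi, translate R2 st.2 xi g,
                       size ls = rkS a &
                       forall i, i < rkS a -> forall st',
                         List.In (st', i) (vars xi) -> st' \in nth set0 ls i]].

Definition M_produces (st : (Q1 * {set Q2}) * Q2) (s : tree Sg) (r : tree Om) : Prop :=
  la_produces Mrules (accepts Mla) st s r.
End Construction.

(* Main.v *)
Require Import Defs.
From Stdlib Require Import Relations.
From Stdlib Require Import ClassicalEpsilon.
From Stdlib Require List.
From mathcomp Require Import all_boot.
Set Implicit Arguments. Unset Strict Implicit. Unset Printing Implicit Defensive.

Definition tree_ind' (A : Type) (P : tree A -> Prop)
  (H : forall a ts, (forall t, List.In t ts -> P t) -> P (Node a ts)) : forall t, P t :=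
  fix F t := match t with Node a ts => H a ts
    ((fix G (ts : seq (tree A)) : forall t, List.In t ts -> P t :=
       match ts with
       | [::] => fun t (h : List.In t [::]) => False_ind _ h
       | t0 :: ts' => fun t (h : List.In t (t0 :: ts')) =>
           match h with
           | or_introl e => eq_ind t0 P (F t0) t e
           | or_intror h' => G ts' t h'
           end
       end) ts) end.

Lemma in_cat (T : Type) (x : T) s1 s2 : List.In x (s1 ++ s2) <-> List.In x s1 \/ List.In x s2.
Proof. elim: s1 => [|a s1 IH] /=; first by tauto. rewrite IH; tauto. Qed.

Lemma Forall2_cat_inv (A B : Type) (R : A -> B -> Prop) ts1 t ts2 ys :
  List.Forall2 R (ts1 ++ t :: ts2) ys -> exists ys1 y ys2,
   [/\ ys = ys1 ++ y :: ys2, List.Forall2 R ts1 ys1, R t y & List.Forall2 R ts2 ys2].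
Proof.
elim: ts1 ys => [|a ts1 IH] ys /= H.
- inversion H; subst. exists [::], y, l'. split => //.
- inversion H; subst. have [ys1 [y' [ys2 [-> h1 h2 h3]]]] := IH _ H4.
  exists (y :: ys1), y', ys2; split => //. by constructor.
Qed.

Lemma Forall2_cat (A B : Type) (R : A -> B -> Prop) ts1 ts2 ys1 ys2 :
  List.Forall2 R ts1 ys1 -> List.Forall2 R ts2 ys2 -> List.Forall2 R (ts1 ++ ts2) (ys1 ++ ys2).
Proof. elim => [|a b l l' h _ IH] //= H2. constructor => //. by apply IH. Qed.

Lemma Forall2_nthP (A B : Type) (R : A -> B -> Prop) l l' :
  List.Forall2 R l l' <-> (size l = size l' /\ forall a b i, i < size l -> R (nth a l i) (nth b l' i)).
Proof.
split.
- elim => [|x y l1 l1' h _ [IH1 IH2]] //=. split; first by rewrite IH1.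
  by move=> a b [|i] //= hi; apply IH2.
- elim: l l' => [|x l IH] [|y l'] //= [E H]; try discriminate E; constructor.
  + exact: (H x y 0).
  + apply IH; split; first by case: E.
    move=> a b i hi; exact: (H a b i.+1).
Qed.

Lemma Forall2_map_l (A B C : Type) (f : A -> C) (R : C -> B -> Prop) l l' :
  List.Forall2 R (map f l) l' <-> List.Forall2 (fun x y => R (f x) y) l l'.
Proof.
split.
- elim: l l' => [|x l IH] l' H; inversion H; subst; constructor => //; by apply IH.
- elim => //= x y l1 l1' h _ IH; by constructor.
Qed.

Lemma Forall2_map_r (A B C : Type) (f : B -> C) (R : A -> C -> Prop) l l' :
  List.Forall2 R l (map f l') <-> List.Forall2 (fun x y => R x (f y)) l l'.
Proof.
split.
- elim: l' l => [|x l' IH] l H; inversion H; subst; constructor => //; by apply IH.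
- elim => //= x y l1 l1' h _ IH; by constructor.
Qed.

Lemma Forall2_impl' (A B : Type) (R R' : A -> B -> Prop) l l' :
  List.Forall2 R l l' -> (forall x y, List.In x l -> R x y -> R' x y) -> List.Forall2 R' l l'.
Proof.
elim => [|x y l1 l1' h _ IH] H; constructor.
- apply H => //; by left.
- apply IH => a b ha; apply H; by right.
Qed.

Lemma Forall2_in (A B : Type) (R : A -> B -> Prop) l l' x :
  List.Forall2 R l l' -> List.In x l -> exists y, List.In y l' /\ R x y.
Proof.
elim => [|a b l1 l1' h _ IH] //= [<-|hx]; first by exists b; split => //; left.
have [y [h1 h2]] := IH hx. exists y; split => //; by right.
Qed.

Lemma Forall2_choice (A B C : Type) (R : A -> B -> Prop) (S1 : A -> C -> Prop) (S2 : C -> B -> Prop) l l' :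
  List.Forall2 R l l' -> (forall x y, List.In x l -> R x y -> exists c, S1 x c /\ S2 c y) ->
  exists cs, List.Forall2 S1 l cs /\ List.Forall2 S2 cs l'.
Proof.
elim => [|x y l1 l1' h _ IH] H; first by exists [::]; split; constructor.
have [c [c1 c2]] := H x y (or_introl erefl) h.
have [cs [h1 h2]] := IH (fun a b ha => H a b (or_intror ha)).
exists (c :: cs); split; by constructor.
Qed.

Lemma fin_choice (C : Type) (Phi : nat -> C -> Prop) n :
  (forall i, i < n -> exists c, Phi i c) ->
  exists cs, size cs = n /\ forall c0 i, i < n -> Phi i (nth c0 cs i).
Proof.
elim: n Phi => [|n IH] Phi H; first by exists [::].
have [c hc] := H 0 erefl.
have [cs [h1 h2]] := IH (fun i => Phi i.+1) (fun i hi => H i.+1 hi).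
exists (c :: cs); split; first by rewrite /= h1.
by move=> c0 [|i] //= hi; apply h2.
Qed.

Lemma take1_drop (T : Type) (i : nat) (s : seq T) :
  (take 1 (drop i s) = [::] /\ size s <= i) \/ (i < size s /\ forall x0, take 1 (drop i s) = [:: nth x0 s i]).
Proof.
case: (ltnP i (size s)) => h; last by left; split => //; rewrite drop_oversize.
right; split => // x0. by rewrite (drop_nth x0 h) /= take0.
Qed.

Lemma take1_in (T : Type) (i : nat) (s : seq T) x :
  take 1 (drop i s) = [:: x] -> List.In x s /\ i < size s /\ forall x0, nth x0 s i = x.
Proof.
case: (take1_drop i s) => [[->]//|[hi H]].
move=> E; have Ex : forall x0, nth x0 s i = x by move=> x0; move: (H x0); rewrite E => -[].
split; last by split.
rewrite -(Ex x). elim: s i hi {H E Ex} => [|a s IH] [|i] //= hi; [by left|right; by apply IH].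
Qed.

Definition cb (P : Prop) : bool := if excluded_middle_informative P then true else false.
Lemma cbP (P : Prop) : cb P <-> P.
Proof. rewrite /cb; case: excluded_middle_informative => //. Qed.
Section BSgen.
Variables (Q Sg D : Type) (R : rules Q Sg D).
Local Notation SF := (tree (sf Q Sg D)).

Inductive BS : SF -> SF -> Prop :=
| BS_cong l ts ts' : List.Forall2 BS ts ts' -> BS (Node l ts) (Node l ts')
| BS_rule q a ss xi Y : R q a xi -> BS (inst ss xi) Y ->
    BS (Node (SSt q) [:: Node (SIn a) (map (tmap SIn) ss)]) Y.

Fixpoint BS_ind2 (P : SF -> SF -> Prop)
  (Hc : forall l ts ts', List.Forall2 BS ts ts' -> List.Forall2 P ts ts' -> P (Node l ts) (Node l ts'))
  (Hr : forall q a ss xi Y, R q a xi -> BS (inst ss xi) Y -> P (inst ss xi) Y ->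
        P (Node (SSt q) [:: Node (SIn a) (map (tmap SIn) ss)]) Y)
  X Y (H : BS X Y) {struct H} : P X Y :=
  match H with
  | BS_cong l ts ts' HF => Hc l ts ts' HF
      ((fix G ts ts' (HF : List.Forall2 BS ts ts') : List.Forall2 P ts ts' :=
         match HF with
         | List.Forall2_nil => List.Forall2_nil _
         | List.Forall2_cons x y l l' h hl => List.Forall2_cons _ _ (BS_ind2 Hc Hr h) (G _ _ hl)
         end) ts ts' HF)
  | BS_rule q a ss xi Y HR HB => Hr q a ss xi Y HR HB (BS_ind2 Hc Hr HB)
  end.

Lemma BS_refl X : BS X X.
Proof.
elim/tree_ind': X => a ts IH; constructor.
elim: ts IH => [|t ts IHl] IH; constructor; first by apply IH; left.
apply IHl => u hu; apply IH; by right.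
Qed.

Lemma step_not_SIn t t' : step R t t' -> forall s, t' <> tmap SIn s.
Proof.
elim => [q a ss xi _|l ts1 u u' ts2 _ IH] s.
- by case: xi => [[d|[q' i]] ?]; case: s.
- case: s => b bs /= E0; injection E0 => E _.
  have : List.In u' (map (tmap SIn) bs) by rewrite -E; apply in_cat; right; left.
  move=> hin. have [s' [E' _]] := (proj1 (List.in_map_iff _ _ _) hin).
  exact: (IH s' (esym E')).
Qed.

Lemma step_BS X X' : step R X X' -> forall Y, BS X' Y -> BS X Y.
Proof.
elim => [q a ss xi HR|l ts1 u u' ts2 Hs IH] Y HY.
- exact: BS_rule HR HY.
- inversion HY as [l0 ts ts' HF|q0 a0 ss0 xi0 Y0 HR HB E0]; subst.
  + have [ys1 [y [ys2 [-> h1 h2 h3]]]] := Forall2_cat_inv HF.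
    constructor; apply Forall2_cat => //; constructor => //; exact: IH.
  + clear HY; case: ts1 H => [|v ts1] /= E; last by case: ts1 E.
    case: E => E _; exfalso; exact: (step_not_SIn (s:=Node a0 ss0) Hs (esym E)).
Qed.

Lemma rt_BS X Y : clos_refl_trans _ (step R) X Y -> BS X Y.
Proof.
move/clos_rt_rt1n_iff; elim => [x|x y z h _ IH]; first exact: BS_refl.
exact: (step_BS h IH).
Qed.

Lemma rt_ctx l ts1 t t' ts2 : clos_refl_trans _ (step R) t t' ->
  clos_refl_trans _ (step R) (Node l (ts1 ++ t :: ts2)) (Node l (ts1 ++ t' :: ts2)).
Proof.
elim => [x y h|x|x y z _ h1 _ h2]; first by apply rt_step; constructor.
- exact: rt_refl.
- exact: rt_trans h1 h2.
Qed.

Lemma Forall2_rt l ts ts' : List.Forall2 (clos_refl_trans _ (step R)) ts ts' ->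
  forall ts1, clos_refl_trans _ (step R) (Node l (ts1 ++ ts)) (Node l (ts1 ++ ts')).
Proof.
elim => [|x y l1 l1' h _ IH] ts1; first exact: rt_refl.
apply: rt_trans; first exact: (rt_ctx l ts1 l1 h).
have := IH (rcons ts1 y). by rewrite -!cats1 -!catA.
Qed.

Lemma BS_rt X Y : BS X Y -> clos_refl_trans _ (step R) X Y.
Proof.
elim/BS_ind2 => [l ts ts' _ HF|q a ss xi Y' HR _ IH].
- exact: (Forall2_rt l HF [::]).
- apply: rt_trans IH. apply rt_step. exact: step_root.
Qed.

Lemma BS_rtE X Y : BS X Y <-> clos_refl_trans _ (step R) X Y.
Proof. split; [exact: BS_rt | exact: rt_BS]. Qed.

Lemma tmapSIn_inj : injective (@tmap Sg (sf Q Sg D) SIn).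
Proof.
elim/tree_ind' => a ts IH [b bs] /= [Eab E]; subst b; congr Node.
elim: ts bs IH E => [|t ts IHl] [|b bs] //= IH [E1 E2].
rewrite (IH t (or_introl erefl) _ E1); congr cons.
apply IHl => // u hu; apply IH; by right.
Qed.

Lemma BS_SIn s Y : BS (tmap SIn s) Y -> Y = tmap SIn s.
Proof.
elim/tree_ind': s Y => a ts IH Y /= H; inversion H as [l0 ts0 ts' H1| ]; subst; congr Node.
move: H1; rewrite Forall2_map_l => H1.
elim: H1 IH => [|x y l l' h _ IHl] IH //=.
rewrite (IH x (or_introl erefl) _ h); congr cons; apply IHl => u hu; apply IH; by right.
Qed.

Lemma BS_state_inv q s Y : BS (Node (SSt q) [:: tmap SIn s]) Y ->
  Y = Node (SSt q) [:: tmap SIn s] \/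
  exists a ss xi, [/\ s = Node a ss, R q a xi & BS (inst ss xi) Y].
Proof.
move=> H; inversion H as [l0 ts0 ts' H1|q0 a0 ss0 xi0 Y0 HR HB E0]; subst.
- left. inversion H1 as [|x y l l' h3 h5]; subst. inversion h5; subst. by rewrite (BS_SIn h3).
- right. exists a0, ss0, xi0; split => //.
  apply: tmapSIn_inj. by rewrite -H0.
Qed.

Inductive InstT (O X V : Type) (emb : O -> X) (P : V -> nat -> tree X -> Prop)
  : tree (O + V * nat) -> tree X -> Prop :=
| IT_out o xs ys : List.Forall2 (InstT emb P) xs ys -> InstT emb P (Node (inl o) xs) (Node (emb o) ys)
| IT_var v i xs y : P v i y -> InstT emb P (Node (inr (v, i)) xs) y.

End BSgen.

Lemma take1_cases (T : Type) (i : nat) (s : seq T) :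
  take 1 (drop i s) = [::] \/ exists x, take 1 (drop i s) = [:: x].
Proof. case: (drop i s) => [|x l]; [by left | right; exists x]; by rewrite /= take0. Qed.

Lemma in_flatten (T : Type) (a : T) (ss : seq (seq T)) :
  List.In a (flatten ss) -> exists s, List.In s ss /\ List.In a s.
Proof.
elim: ss => [|s ss IH] //= /in_cat [h|h]; first by exists s; split => //; left.
have [s' [h1 h2]] := IH h; exists s'; split => //; by right.
Qed.

Lemma Forall2_all_r (A B : Type) (p : B -> bool) (S : A -> B -> Prop) l cs :
  List.Forall2 S l cs -> (forall x c, S x c -> p c) -> all p cs.
Proof. elim => //= x c l1 cs1 h _ IH H; rewrite (H _ _ h); exact: IH. Qed.

Section InstGen.
Variables (Q Sg O X : Type) (R : rules Q Sg O) (emb : O -> X)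
  (E : tree X -> tree (sf Q Sg O)).
Hypothesis HE1 : forall o ys, E (Node (emb o) ys) = Node (SOut o) (map E ys).
Hypothesis HE2 : forall y o us, E y = Node (SOut o) us -> exists ys, y = Node (emb o) ys.
Hypothesis HE3 : forall y q, E y <> Node (SSt q) [::].

Definition LeafP (ss : seq (tree Sg)) (q : Q) (i : nat) (y : tree X) : Prop :=
  exists si, take 1 (drop i ss) = [:: si] /\ BS R (Node (SSt q) [:: tmap SIn si]) (E y).

Lemma BS_out_inv o ts Y : BS R (Node (SOut o) ts) Y ->
  exists ys, Y = Node (SOut o) ys /\ List.Forall2 (BS R) ts ys.
Proof. move=> H; inversion H; subst. by exists ts'. Qed.

Lemma BS_nil_inv q Y : BS R (Node (@SSt Q Sg O q) [::]) Y -> Y = Node (SSt q) [::].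
Proof. move=> H; inversion H as [l0 ts0 ts' HF| ]; subst. by inversion HF. Qed.

Lemma BS_inst_dec ss xi y : BS R (inst ss xi) (E y) -> InstT emb (LeafP ss) xi y.
Proof.
elim/tree_ind': xi y => [[o|[q i]] xs IH] y /= H.
- have [us [Ey HF]] := BS_out_inv H.
  have [ys Ey'] := HE2 Ey. subst y. move: Ey; rewrite HE1 => -[Eus]. subst us.
  constructor. move: HF; rewrite Forall2_map_l Forall2_map_r => HF.
  apply: (Forall2_impl' HF) => x y' hx h. exact: IH.
- move: H; rewrite -map_drop -map_take.
  case: (take1_cases i ss) => [->|[x Ex]] H.
  + by have := HE3 (BS_nil_inv H).
  + constructor; exists x; split => //. by rewrite Ex in H.
Qed.

Lemma BS_inst_comp ss xi y : InstT emb (LeafP ss) xi y -> BS R (inst ss xi) (E y).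
Proof.
elim/tree_ind': xi y => [[o|[q i]] xs IH] y H; inversion H as [o0 xs0 ys H1|v0 i0 xs0 y0 H1]; subst.
- rewrite HE1 /=; constructor. rewrite Forall2_map_l Forall2_map_r.
  apply: (Forall2_impl' H1) => x y' hx h. exact: IH.
- have [si [Es HB]] := H1. by rewrite /= -map_drop -map_take Es.
Qed.

End InstGen.

Lemma InstT_vars (O X V : Type) (emb : O -> X) (P : V -> nat -> tree X -> Prop) xi y v i :
  InstT emb P xi y -> List.In (v, i) (vars xi) -> exists y', P v i y'.
Proof.
elim/tree_ind': xi y => [[o|[q j]] xs IH] y H; inversion H as [o0 xs0 ys H1|v0 i0 xs0 y0 H1]; subst => /=.
- move=> hin; have [s [hs hv]] := in_flatten hin.
  have [x [Ex hx]] := proj1 (List.in_map_iff _ _ _) hs. subst s.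
  have [y' [_ hy]] := Forall2_in H1 hx. exact: IH hy hv.
- case => // -[<- <-]. by exists y.
Qed.

Lemma InstT_mono (O X V : Type) (emb : O -> X) (P P' : V -> nat -> tree X -> Prop) xi y :
  InstT emb P xi y -> (forall v i y, P v i y -> P' v i y) -> InstT emb P' xi y.
Proof.
elim/tree_ind': xi y => [[o|[q j]] xs IH] y H HP; inversion H as [o0 xs0 ys H1|v0 i0 xs0 y0 H1]; subst.
- constructor. apply: (Forall2_impl' H1) => x y' hx h. exact: IH.
- constructor. exact: HP.
Qed.

Lemma InstT_bind (O V W : Type) (P : V -> nat -> tree O -> Prop)
  (Phi : V -> nat -> tree (O + W * nat) -> Prop) (P3 : W -> nat -> tree O -> Prop) xi r :
  InstT id P xi r ->
  (forall v i r', P v i r' -> exists g', [/\ Phi v i g', leafvars g' & InstT id P3 g' r']) ->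
  exists g, [/\ InstT inl Phi xi g, leafvars g & InstT id P3 g r].
Proof.
elim/tree_ind': xi r => [[o|[q j]] xs IH] r H HP; inversion H as [o0 xs0 ys H1|v0 i0 xs0 y0 H1]; subst.
- have [cs [h1 h2]] := Forall2_choice
    (S1 := fun x c => InstT inl Phi x c /\ leafvars c) (S2 := fun c y => InstT id P3 c y) H1
    (fun x y hx hxy => match IH x hx y hxy HP with ex_intro g (And3 a b c) => ex_intro _ g (conj (conj a b) c) end).
  exists (Node (inl o) cs); split.
  + constructor. apply: (Forall2_impl' h1) => x c _ [] //.
  + rewrite /=. exact: (Forall2_all_r h1 (fun x c h => proj2 h)).
  + exact: (@IT_out O O W id P3 o cs ys h2).
- have [g' [a b c]] := HP _ _ _ H1. exists g'; split => //. by constructor.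
Qed.

Lemma in_vars_child (O V : Type) (o : O) (x : tree (O + V * nat)) xs p :
  List.In x xs -> List.In p (vars x) -> List.In p (vars (Node (inl o) xs)).
Proof.
move=> hx hp /=. elim: xs hx => [|x0 xs IHx] //= [E|hx]; apply/in_cat;
  [left; by rewrite E | right; exact: IHx].
Qed.

Lemma InstT_mono_in (O X V : Type) (emb : O -> X) (P P' : V -> nat -> tree X -> Prop) xi y :
  InstT emb P xi y -> (forall v i y, List.In (v, i) (vars xi) -> P v i y -> P' v i y) ->
  InstT emb P' xi y.
Proof.
elim/tree_ind': xi y => [[o|[q j]] xs IH] y H HP;
  inversion H as [o0 xs0 ys H1|v0 i0 xs0 y0 H1]; subst.
- constructor. apply: (Forall2_impl' H1) => x y' hx h. apply: (IH x hx _ h) => v i y1 hv.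
  apply: HP. exact: in_vars_child hx hv.
- constructor. apply: HP => //=. by left.
Qed.

Lemma Forall2_diag (A : Type) (R : A -> A -> Prop) l :
  (forall x, List.In x l -> R x x) -> List.Forall2 R l l.
Proof. elim: l => [|x l IH] H; constructor; [apply H; left | apply IH => y hy; apply H; right] => //. Qed.

Section Prods.
Variables (Q Sg O : Type) (R : rules Q Sg O).
Definition Prod (q : Q) (s : tree Sg) (t : tree O) : Prop :=
  BS R (Node (SSt q) [:: tmap SIn s]) (tmap SOut t).

Lemma ProdE q s t : produces R q s t <-> Prod q s t.
Proof. exact: (iff_sym (BS_rtE _ _ _)). Qed.

Lemma Prod_dec q s t : Prod q s t -> exists a ss xi,
  [/\ s = Node a ss, R q a xi & InstT id (LeafP R (tmap SOut) ss) xi t].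
Proof.
move=> H0; case: (BS_state_inv H0) => [|[a [ss [xi [-> HR HB]]]]]; first by clear H0; case: t.
exists a, ss, xi; split => //. apply: BS_inst_dec HB => //.
- move=> y o us; case: y => o' ys /= [-> _]; by exists ys.
- by move=> [o ys] q'.
Qed.

Lemma Prod_comp q a ss xi t : R q a xi -> InstT id (LeafP R (tmap SOut) ss) xi t ->
  Prod q (Node a ss) t.
Proof.
move=> HR HI. apply: BS_rule HR _. apply: BS_inst_comp HI => //.
Qed.
End Prods.

Section Trans.
Variables (Q Q' D O : Type) (R' : rules Q' D O).
Local Notation L := (@Defs.lift Q Q' D O R').
Local Notation EM := (@emb_mixed Q Q' D O).

Lemma EM1 o ys : EM (Node (inl o) ys) = Node (SOut o) (map EM ys).
Proof. by []. Qed.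
Lemma EM2 y o us : EM y = Node (SOut o) us -> exists ys, y = Node (inl o) ys.
Proof. case: y => [[o'|[[q p] i]] ys] //= [->]; by exists ys. Qed.
Lemma EM3 y q : EM y <> Node (SSt q) [::].
Proof. by case: y => [[o'|[[q' p] i]] ys]. Qed.

Lemma tr_inl_inv p d xs z :
  BS L (Node (SSt p) [:: tmap SIn (Node (inl d) xs)]) (EM z) ->
  exists chi, R' p d chi /\ InstT inl (LeafP L EM xs) chi z.
Proof.
move=> H0; case: (BS_state_inv H0) => [|[a [ss [xi [E HR HB]]]]].
- by clear H0; case: z => [[o'|[[q' p'] i]] ys].
- case: E => Ea Es; subst. exists xi; split => //.
  exact: (BS_inst_dec EM1 EM2 EM3 HB).
Qed.

Lemma tr_inr_inv p q i ys z :
  BS L (Node (SSt p) [:: tmap SIn (Node (inr (q, i)) ys)]) (EM z) ->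
  ys = [::] /\ exists zz, z = Node (inr ((q, p), i)) zz.
Proof.
move=> H0; case: (BS_state_inv H0) => [|[a [ss [xi [E HR HB]]]]].
- clear H0; case: z => [[o'|[[q' p'] i']] zz] //= [-> [-> ->]]. case: ys => // _.
  split => //; by exists zz.
- case: E => Ea Es; subst. by [].
Qed.

Lemma tr_inl_comp p d xs chi z : R' p d chi -> InstT inl (LeafP L EM xs) chi z ->
  BS L (Node (SSt p) [:: tmap SIn (Node (inl d) xs)]) (EM z).
Proof.
move=> HR HI. apply: (@BS_rule _ _ _ L p (inl d) xs chi) => //.
exact: (BS_inst_comp EM1 HI).
Qed.
End Trans.

Section DomAut.
Variables (Q : finType) (Sg D : Type) (rk : Sg -> nat) (R : rules Q Sg D).
Definition chi (a : Sg) (f : nat -> {set Q}) : tree (Sg + {set Q} * nat) :=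
  Node (inl a) (mkseq (fun i => Node (inr (f i, i)) [::]) (rk a)).
Definition DA (P : {set Q}) (a : Sg) (f : nat -> {set Q}) : Prop :=
  exists G : Q -> tree (D + Q * nat) -> Prop,
    (forall q, q \in P -> (exists x, G q x) /\ (forall x, G q x -> R q a x)) /\
    (forall i, i < rk a -> forall q',
        q' \in f i <-> exists q x, [/\ q \in P, G q x & List.In (q', i) (vars x)]).

Lemma dom_autE P a xi : dom_aut rk R P a xi <-> exists f, xi = chi a f /\ DA P a f.
Proof.
split.
- move=> [f [-> H]]; exists f; split => //.
  case: eqP H => [-> H|_ H] //.
  exists (fun _ _ => False); split; first by move=> q; rewrite in_set0.
  move=> i hi q'; rewrite H // in_set0; split => //.
  by move=> [q [x [_ []]]].
- move=> [f [-> [G [H1 H2]]]]; exists f; split => //.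
  case: eqP => [EP|_]; last by exists G.
  move=> i hi; apply/setP => q'; rewrite in_set0.
  apply/negP => /(H2 i hi) [q [x [hq _ _]]]. by rewrite EP in_set0 in hq.
Qed.
End DomAut.

Lemma allIn (T : Type) (p : T -> bool) s x : all p s -> List.In x s -> p x.
Proof. elim: s => [|y s IH] //= /andP [h1 h2] [<-|hx] //; exact: IH. Qed.

Section Main.
Variables (Sg De Om : Type) (rkS : Sg -> nat) (rkD : De -> nat) (Q1 Q2 : finType)
  (R1 : rules Q1 Sg De) (R2 : rules Q2 De Om).

Local Notation T1h := (That1 rkD R1 R2).
Local Notation LD := (@Defs.lift Q1 {set Q2} De De (dom_aut rkD R2)).
Local Notation L2 := (@Defs.lift (Q1 * {set Q2}) Q2 De Om R2).
Local Notation EMD := (@emb_mixed Q1 {set Q2} De De).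
Local Notation EM2 := (@emb_mixed (Q1 * {set Q2}) Q2 De Om).

Definition LeafT1 ss := LeafP T1h (tmap SOut) ss.
Definition LeafM ss (v : (Q1 * {set Q2}) * Q2) (i : nat) (r' : tree Om) : Prop :=
  v.2 \in v.1.2 /\ exists si t', [/\ take 1 (drop i ss) = [:: si], Prod T1h v.1 si t' & Prod R2 v.2 t' r'].
Definition LA (s : tree Sg) : Prop := forall q S (X : {set Q2}) t,
  Prod T1h (q, S) s t -> (forall p, p \in X -> exists r, Prod R2 p t r) -> Prod T1h (q, S :|: X) s t.

Lemma Core ss (HA : forall s, List.In s ss -> LA s) xi : forall P z t (X : {set Q2}),
  BS LD (Node (SSt P) [:: tmap SIn xi]) (EMD z) ->
  InstT id (LeafT1 ss) z t ->
  (forall p, p \in X -> exists r, Prod R2 p t r) ->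
  exists z', [/\ BS LD (Node (SSt (P :|: X)) [:: tmap SIn xi]) (EMD z'), leafvars z',
     InstT id (LeafT1 ss) z' t &
     forall p, p \in X -> forall r, Prod R2 p t r -> exists g,
        [/\ BS L2 (Node (SSt p) [:: tmap SIn z']) (EM2 g), leafvars g & InstT id (LeafM ss) g r]].
Proof.
elim/tree_ind': xi => [[d|[q i]] xs IH] P z t X HB HI HX.
2: {
  have [-> [zz Ez]] := tr_inr_inv HB. subst z.
  inversion HI as [o0 xs0 ys0 H1|v0 i0 xs0 y0 HL]; subst.
  have [si [Es Hp]] := HL.
  have [hin _] := take1_in Es.
  have Hp' := HA si hin q P X t Hp HX.
  exists (Node (inr ((q, P :|: X), i)) [::]); split => //.
  - exact: BS_refl.
  - constructor. by exists si.
  - move=> p hp r Hr. exists (Node (inr (((q, P :|: X), p), i)) [::]); split => //.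
    + exact: BS_refl.
    + constructor. split; first by rewrite /= in_setU hp orbT.
      by exists si, t.
}
have [chi0 [Hda HIc]] := tr_inl_inv HB.
have [f [Ec HDA]] := (dom_autE rkD R2 P d chi0).1 Hda. subst chi0.
have [G [HG1 HG2]] := HDA.
rewrite /chi in HIc.
inversion HIc as [o0 xs0 zs HFz|]; subst.
inversion HI as [o1 xs1 ts HFt|]; subst.
move: HFz => /Forall2_nthP [Hsz HFz]. rewrite size_mkseq in Hsz HFz.
move: HFt => /Forall2_nthP [Hst HFt].
pose z0 := Node (inl d) zs.
pose t0 := Node d ts.
have Hch : forall i, i < rkD d -> exists xsi, take 1 (drop i xs) = [:: xsi] /\
    BS LD (Node (SSt (f i)) [:: tmap SIn xsi]) (EMD (nth z0 zs i)).
  move=> i hi; have := HFz (Node (inr (f i, i)) [::]) z0 i hi; rewrite nth_mkseq // => H.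
  inversion H as [|v0 i0 xs0 y0 HL]; subst. exact: HL.
have Hrun : forall p r, Prod R2 p (Node d ts) r ->
    exists rho, R2 p d rho /\ InstT id (LeafP R2 (tmap SOut) ts) rho r.
  move=> p r Hr; have [a' [ss' [rho [E HR HIr]]]] := Prod_dec Hr.
  case: E => Ea Es; subst. by exists rho.
pose G' p rho := R2 p d rho /\ forall p' j, List.In (p', j) (vars rho) ->
    exists r', LeafP R2 (tmap SOut) ts p' j r'.
pose Xi j := [set p' | cb (exists p rho, [/\ p \in X, G' p rho & List.In (p', j) (vars rho)])].
pose f2 j := f j :|: Xi j.
have HDA2 : DA rkD R2 (P :|: X) d f2.
  exists (fun q rho => (q \in P /\ G q rho) \/ (q \in X /\ G' q rho)); split.
  - move=> q; rewrite in_setU => hq; split; last first.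
      move=> x [[h1 h2]|[h1 h2]]; [exact: (HG1 q h1).2 | exact: h2.1].
    case/orP: hq => hq.
    + have [[x hx] _] := HG1 q hq. exists x; by left.
    + have [r Hr] := HX q hq. have [rho [HR HIr]] := Hrun _ _ Hr.
      exists rho; right; split => //; split => // p' j hv. exact: InstT_vars HIr hv.
  - move=> i hi q'. rewrite /f2 in_setU in_set. split.
    + move/orP => [/(HG2 i hi) [q0 [x [h1 h2 h3]]] | /cbP [p [rho [h1 h2 h3]]]].
      * exists q0, x; split => //; [by rewrite in_setU h1 | by left].
      * exists p, rho; split => //; [by rewrite in_setU h1 orbT | by right].
    + move=> [q0 [x [h1 [[h2 h3]|[h2 h3]] h4]]]; apply/orP;
        [left; apply/(HG2 i hi); by exists q0, x | right; apply/cbP; by exists q0, x].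
have Hkids : forall i, i < rkD d -> exists z'i, exists xsi,
   [/\ take 1 (drop i xs) = [:: xsi], BS LD (Node (SSt (f2 i)) [:: tmap SIn xsi]) (EMD z'i),
       leafvars z'i, InstT id (LeafT1 ss) z'i (nth t0 ts i) &
       forall p, p \in Xi i -> forall r, Prod R2 p (nth t0 ts i) r -> exists g,
        [/\ BS L2 (Node (SSt p) [:: tmap SIn z'i]) (EM2 g), leafvars g & InstT id (LeafM ss) g r]].
  move=> i hi. have [xsi [Es HBi]] := Hch i hi. have [hin _] := take1_in Es.
  have HIi : InstT id (LeafT1 ss) (nth z0 zs i) (nth t0 ts i) by apply: HFt; rewrite -Hsz.
  have HXi : forall p, p \in Xi i -> exists r, Prod R2 p (nth t0 ts i) r.
    move=> p; rewrite in_set => /cbP [p0 [rho [h1 [_ h2] h3]]].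
    have [r' [tj [Etj Hp]]] := h2 _ _ h3. have [_ [_ Etj']] := take1_in Etj.
    exists r'. by rewrite (Etj' t0).
  have [z'i [a1 a2 a3 a4]] := IH xsi hin (f i) (nth z0 zs i) (nth t0 ts i) (Xi i) HBi HIi HXi.
  exists z'i, xsi; split => //.
have [zs' [Hsz' Hzs']] := fin_choice Hkids.
exists (Node (inl d) zs'); split.
- apply: (tr_inl_comp (chi := chi rkD d f2)).
  + apply/(dom_autE rkD R2). by exists f2.
  + rewrite /chi; constructor; apply/Forall2_nthP; split; first by rewrite size_mkseq Hsz'.
    move=> a b i; rewrite size_mkseq => hi; rewrite nth_mkseq //; constructor.
    have [xsi [Es a1 _ _ _]] := Hzs' b i hi. by exists xsi.
- rewrite /=; apply/(all_nthP z0) => i hi. rewrite Hsz' in hi.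
  by have [xsi [_ _ a2 _ _]] := Hzs' z0 i hi.
- change (InstT id (LeafT1 ss) (Node (inl d) zs') (Node (id d) ts)). constructor.
  apply/Forall2_nthP; split; first by rewrite Hsz' Hsz Hst.
  move=> a b i hi. rewrite Hsz' in hi. have [xsi [_ _ _ a3 _]] := Hzs' a i hi.
  rewrite (set_nth_default t0) //. by rewrite -Hst -Hsz.
- move=> p hp r Hr. have [rho [HR HIr]] := Hrun _ _ Hr.
  have HIr' : InstT id (fun v j r' => LeafP R2 (tmap SOut) ts v j r' /\ v \in Xi j) rho r.
    apply: (InstT_mono_in HIr) => v j y hv hl; split => //. rewrite in_set; apply/cbP.
    exists p, rho; split => //; split => // p' j' hv'. exact: InstT_vars HIr hv'.
  have Hb : forall v j r', (LeafP R2 (tmap SOut) ts v j r' /\ v \in Xi j) ->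
      exists g', [/\ LeafP L2 EM2 zs' v j g', leafvars g' & InstT id (LeafM ss) g' r'].
    move=> v j r' [[tj [Etj Hpj]] hvX].
    have [_ [hj Etj']] := take1_in Etj.
    have hj' : j < rkD d by rewrite Hsz Hst.
    have [xsj [_ _ _ _ a4]] := Hzs' z0 j hj'.
    have Hr' : Prod R2 v (nth t0 ts j) r' by rewrite (Etj' t0).
    have [g' [b1 b2 b3]] := a4 v hvX r' Hr'.
    exists g'; split => //. exists (nth z0 zs' j); split => //.
    case: (take1_drop j zs') => [[_ hle]|[_ E]]; last exact: E.
    by rewrite Hsz' leqNgt hj' in hle.
  have [g [g1 g2 g3]] := InstT_bind HIr' Hb.
  exists g; split => //. exact: tr_inl_comp HR g1.
Qed.

Lemma LA_all s : LA s.
Proof.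
elim/tree_ind': s => a ss IH q S X t Hp HX.
have [a' [ss' [z [E HR HI]]]] := Prod_dec Hp. case: E => Ea Es; subst a' ss'.
have [xi1 [HR1 [Hlv Htr]]] := HR.
have HB := rt_BS Htr.
have [z' [a1 a2 a3 _]] := Core IH HB HI HX.
apply: (Prod_comp (xi := z')) a3. exists xi1; split => //; split => //. exact: BS_rt a1.
Qed.

Lemma dom_ok s : wr rkS s -> forall P : {set Q1 * {set Q2}},
  (forall x, x \in P -> exists t, Prod T1h x s t) -> Prod (Mla rkS rkD R1 R2) P s s.
Proof.
elim/tree_ind': s => a ss IH /= /andP [/eqP Hsz Hall] P HP.
pose G x c := T1h x a c /\ forall v j, List.In (v, j) (vars c) ->
   exists t', LeafP T1h (tmap SOut) ss v j t'.
pose f j := [set v | cb (exists x c, [/\ x \in P, G x c & List.In (v, j) (vars c)])].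
apply: (Prod_comp (xi := chi rkS a f)).
- apply: (proj2 (dom_autE rkS T1h P a _)). exists f; split => //. exists G; split.
  + move=> x hx; split; last by move=> c [].
    have [t Ht] := HP x hx. have [a' [ss' [c [E HR HI]]]] := Prod_dec Ht.
    case: E => Ea Es; subst.
    exists c; split => // v j hv. exact: InstT_vars HI hv.
  + move=> i hi q'; rewrite in_set; exact: cbP.
- rewrite /chi -[Node a ss]/(Node (id a) ss). constructor.
  apply/Forall2_nthP; split; first by rewrite size_mkseq Hsz.
  move=> c0 b i; rewrite size_mkseq => hi; rewrite nth_mkseq //. constructor.
  have hi' : i < size ss by rewrite Hsz.
  have Es : take 1 (drop i ss) = [:: nth b ss i].
    case: (take1_drop i ss) => [[_ h]|[_ E]]; last exact: E.
    by rewrite leqNgt hi' in h.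
  have [hin _] := take1_in Es.
  exists (nth b ss i); split => //.
  apply: IH => //; first exact: (allIn Hall hin).
  move=> x; rewrite in_set => /cbP [x0 [c [_ [_ Hc] hv]]].
  have [t' [sj [Esj Hpj]]] := Hc _ _ hv. have [_ [_ E']] := take1_in Esj.
  exists t'; by rewrite (E' b).
Qed.

Definition Dom (s : tree Sg) : {set Q1 * {set Q2}} := [set x | cb (exists t, Prod T1h x s t)].

Fixpoint canon (s : tree Sg) : tree (Sg * seq {set Q1 * {set Q2}}) :=
  match s with Node a ss => Node (a, map Dom ss) (map canon ss) end.

Lemma relab_canon s : wr rkS s -> relab (accepts (Mla rkS rkD R1 R2)) s (canon s).
Proof.
elim/tree_ind': s => a ss IH /= /andP [_ Hall]. constructor.
- apply/Forall2_map_l. apply: Forall2_diag => x hx. rewrite /accepts ProdE.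
  apply: dom_ok; first exact: (allIn Hall hx).
  move=> y; rewrite in_set => /cbP //.
- apply/Forall2_map_r. apply: Forall2_diag => x hx. apply: IH => //. exact: (allIn Hall hx).
Qed.

Lemma claim s : wr rkS s -> forall q (S : {set Q2}) (q2 : Q2) t r, q2 \in S -> Prod T1h (q, S) s t -> Prod R2 q2 t r ->
  Prod (fun q (x : Sg * seq {set Q1 * {set Q2}}) xi => Mrules rkS rkD R1 R2 q x.1 x.2 xi)
    ((q, S), q2) (canon s) r.
Proof.
elim/tree_ind': s => a ss IH Hwr q S q2 t r hq2 Hp Hr.
have Hwr' := Hwr; move: Hwr' => /= /andP [/eqP Hsz Hall].
have [a' [ss' [z [E HR HI]]]] := Prod_dec Hp. case: E => Ea Es; subst a' ss'.
have [xi1 [HR1 [Hlv Htr]]] := HR.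
have HB := rt_BS Htr.
have HX : forall p, p \in [set q2] -> exists r, Prod R2 p t r
  by move=> p; rewrite in_set1 => /eqP ->; exists r.
have [z' [a1 a2 a3 a4]] := Core (fun s _ => @LA_all s) HB HI HX.
have ES : S :|: [set q2] = S by apply/setUidPl; rewrite sub1set.
rewrite ES in a1.
have [g [g1 g2 g3]] := a4 q2 (set11 q2) r Hr.
apply: (Prod_comp (xi := g)) => /=.
- split.
  + exact: hq2.
  + move=> st' i hv. have [r' [h _]] := InstT_vars g3 hv. exact: h.
  + exists z'; split.
    * exists xi1; split => //; split => //. exact: BS_rt a1.
    * split => //. exact: BS_rt g1.
    * by rewrite size_map.
    * move=> i hi st' hv. have [t' [si [Es Hp']]] := InstT_vars a3 hv.
      have [_ [hi' E']] := take1_in Es.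
      rewrite (nth_map (Node a ss)) // E' in_set; apply/cbP; by exists t'.
- apply: (InstT_mono g3) => -[[q' S'] p'] i r' [/= hp' [si [t' [Es Hp1 Hp2]]]].
  exists (canon si); split; first by rewrite -map_drop -map_take Es.
  have [hin _] := take1_in Es.
  by apply: (IH si hin (allIn Hall hin) q' S' p' t' r').
Qed.

Lemma main s t r q (S : {set Q2}) (q2 : Q2) : wr rkS s -> q2 \in S -> produces T1h (q, S) s t ->
  produces R2 q2 t r -> M_produces rkS rkD R1 R2 ((q, S), q2) s r.
Proof.
move=> Hw hq H1 H2. exists (canon s); split; first exact: relab_canon.
have H1' : Prod T1h (q, S) s t by apply/ProdE.
have H2' : Prod R2 q2 t r by apply/ProdE.
apply/ProdE. exact: (claim Hw hq H1' H2').
Qed.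
End Main.

Theorem lemma5 (Sg De Om : finType) (rkS : Sg -> nat) (rkD : De -> nat) (rkO : Om -> nat)
  (Q1 Q2 : finType)
  (R1 : seq (Q1 * Sg * tree (De + Q1 * nat)))
  (R2 : seq (Q2 * De * tree (Om + Q2 * nat)))
  (q10 : Q1) (q20 : Q2)
  (wf1 : wf_td rkS rkD R1) (wf2 : wf_td rkD rkO R2)
  (q1 : Q1) (S : {set Q2}) (q2 : Q2) (HM : q2 \in S)
  (s : tree Sg) (t : tree De) (r : tree Om) (Hs : wr rkS s) :
  produces (That1 rkD (rules_of R1) (rules_of R2)) (q1, S) s t ->
  produces (rules_of R2) q2 t r ->
  M_produces rkS rkD (rules_of R1) (rules_of R2) ((q1, S), q2) s r.
Proof. move=> H1 H2. exact: (main Hs HM H1 H2). Qed.
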